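(* Let $\{X_s,\|\cdot\|_s\}_{s\in\mathbb N_0}$ be a sequence of Banach spaces satisfying (F1)–(F3) and $\{g_i\}_{i=1}^\infty\in(X_0^* )^{\mathbb N}$. Assume there is a sequence $\{f_i\}_{i=1}^\infty$ of nonzero elements of $X_F$ such that for every $s\in\mathbb N_0$ and every $f\in X_s$, $f=\sum_{i=1}^\infty g_i(f)f_i$ with convergence in $X_s$. Then there exists a sequence $\{\Theta_s\}_{s\in\mathbb N_0}$ of $CB$-spaces satisfying (F1)–(F3) such that $\{g_i|_{X_F}\}_{i=1}^\infty$ is an $F$-frame for $X_F$ with respect to $\Theta_F$, and $\{f_i\}$ is a $DF$-Bessel sequence for $X_F^*$ with respect to $\Theta_F^*$.
   Context: Conditions (F1)–(F3) for a sequence $\{Y_s,|\cdot|_s\}_{s\in\mathbb N_0}$ of separable Banach spaces: (F1) $\{0\}\neq\bigcap_sY_s\subseteq\dots\subseteq Y_1\subseteq Y_0$; (F2) $|\cdot|_0\le|\cdot|_1\le\dots$; (F3) $Y_F:=\bigcap_sY_s$ dense in each $Y_s$. $X_F=\bigcap_sX_s$, $\Theta_F=\bigcap_s\Theta_s$. $BK$-space: Banach sequence space with continuous coordinate functionals; $CB$-space: $BK$-space in which the canonical vectors $e_i$ form a Schauder basis. For a $CB$-space $\Theta$, $\Theta^*$ is identified with $\{\{g(e_i)\}:g\in\Theta^*\}$ normed by $\|g\|_{\Theta^*}$. For a Banach space $X$ and $BK$-space $\Theta$, $\{h_i\}\subset X^*$ is a $\Theta$-Bessel sequence for $X$ if $\{h_i(f)\}\in\Theta$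 and $|||\{h_i(f)\}|||\le B\|f\|$ for all $f\in X$ (applied to $\{f_i\}\subset X\subseteq X^{**}$ acting on $X^*$). $F$-frame for $X_F$ w.r.t. $\Theta_F$: $\{g_i\}\in(X_F^* )^{\mathbb N}$ with $\{g_i(f)\}\in\Theta_F$ for $f\in X_F$, constants $0<A_s\le B_s$ with $A_s\|f\|_s\le|||\{g_i(f)\}|||_s\le B_s\|f\|_s$ for all $s$ and $f\in X_F$, and an operator $V:\Theta_F\to X_F$ with $V(\{g_i(f)\})=f$ which is $F$-bounded ($\|Vc\|_s\le K_s|||c|||_s$ for each $s$). $\{f_i\}\in(X_F)^{\mathbb N}$ is a $DF$-Bessel sequence for $X_F^*$ w.r.t. $\Theta_F^*$ if it is a $\Theta_s^*$-Bessel sequence for $X_s^*$ for every $s$. *)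

(* Defs.v *)
(* real Banach spaces modelled as subspaces of an ambient real vector space. *)
From Stdlib Require Import Reals Lra FunctionalExtensionality.
Open Scope R_scope.

Record RVS := {
  vT :> Type;
  vzero : vT;
  vadd : vT -> vT -> vT;
  vopp : vT -> vT;
  vscal : R -> vT -> vT;
  vadd_assoc : forall x y z, vadd x (vadd y z) = vadd (vadd x y) z;
  vadd_comm : forall x y, vadd x y = vadd y x;
  vadd_0r : forall x, vadd x vzero = x;
  vadd_oppr : forall x, vadd x (vopp x) = vzero;
  vscal_assoc : forall a b x, vscal a (vscal b x) = vscal (a * b) x;
  vscal_1 : forall x, vscal 1 x = x;
  vscal_addv : forall a x y, vscal a (vadd x y) = vadd (vscal a x) (vscal a y);
  vscal_adds : forall a b x, vscal (a + b) x = vadd (vscal a x) (vscal b x)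
}.

Arguments vzero {_}.
Arguments vadd {_} _ _.
Arguments vopp {_} _.
Arguments vscal {_} _ _.

Definition vsub {V : RVS} (x y : V) : V := vadd x (vopp y).

Fixpoint vsum {V : RVS} (n : nat) (u : nat -> V) : V :=
  match n with
  | O => vzero
  | S k => vadd (vsum k u) (u k)
  end.

Definition seqR := nat -> R.

Definition seqRVS : RVS.
Proof.
  refine (@Build_RVS seqR (fun _ => 0) (fun x y i => x i + y i) (fun x i => - x i)
            (fun a x i => a * x i) _ _ _ _ _ _ _ _);
  intros; apply functional_extensionality; intros; ring.
Defined.

Definition e_can (i : nat) : seqRVS := fun j => if Nat.eqb i j then 1 else 0.

Section Normed.
Context {V : RVS}.

Definition subspace (P : V -> Prop) : Prop :=
  P vzero /\ (forall x y, P x -> P y -> P (vadd x y)) /\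
  (forall a x, P x -> P (vscal a x)).

Definition is_norm_on (P : V -> Prop) (N : V -> R) : Prop :=
  (forall x, P x -> 0 <= N x) /\
  (forall x, P x -> N x = 0 -> x = vzero) /\
  (forall a x, P x -> N (vscal a x) = Rabs a * N x) /\
  (forall x y, P x -> P y -> N (vadd x y) <= N x + N y).

Definition conv_in (N : V -> R) (u : nat -> V) (x : V) : Prop :=
  forall eps, 0 < eps -> exists n0, forall n, (n0 <= n)%nat -> N (vsub (u n) x) < eps.

Definition cauchy_in (N : V -> R) (u : nat -> V) : Prop :=
  forall eps, 0 < eps -> exists n0, forall n m, (n0 <= n)%nat -> (n0 <= m)%nat ->
    N (vsub (u n) (u m)) < eps.

Definition complete_in (P : V -> Prop) (N : V -> R) : Prop :=
  forall u : nat -> V, (forall n, P (u n)) -> cauchy_in N u ->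
    exists x, P x /\ conv_in N u x.

Definition separable_in (P : V -> Prop) (N : V -> R) : Prop :=
  exists d : nat -> V, (forall n, P (d n)) /\
    forall x, P x -> forall eps, 0 < eps -> exists n, N (vsub (d n) x) < eps.

Definition Banach (P : V -> Prop) (N : V -> R) : Prop :=
  subspace P /\ is_norm_on P N /\ complete_in P N.

Definition SepBanach (P : V -> Prop) (N : V -> R) : Prop :=
  Banach P N /\ separable_in P N.

Definition ContLinFun (P : V -> Prop) (N : V -> R) (h : V -> R) : Prop :=
  (forall x y, P x -> P y -> h (vadd x y) = h x + h y) /\
  (forall a x, P x -> h (vscal a x) = a * h x) /\
  (exists C, forall x, P x -> Rabs (h x) <= C * N x).

Definition opnorm_le (P : V -> Prop) (N : V -> R) (h : V -> R) (M : R) : Prop :=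
  forall x, P x -> Rabs (h x) <= M * N x.

Definition Fsequence (P : nat -> V -> Prop) (N : nat -> V -> R) : Prop :=
  (forall s, SepBanach (P s) (N s)) /\
  (forall s x, P (S s) x -> P s x) /\
  (exists x, x <> vzero /\ forall s, P s x) /\
  (forall s x, P (S s) x -> N s x <= N (S s) x) /\
  (forall s x, P s x -> forall eps, 0 < eps ->
     exists y, (forall t, P t y) /\ N s (vsub y x) < eps).

Definition inF (P : nat -> V -> Prop) (x : V) : Prop := forall s, P s x.

End Normed.

Definition BKspace (T : seqRVS -> Prop) (Nt : seqRVS -> R) : Prop :=
  Banach T Nt /\
  forall i : nat, exists C, forall c, T c -> Rabs (c i) <= C * Nt c.

Definition SchauderBasis {V : RVS} (P : V -> Prop) (N : V -> R) (b : nat -> V) : Prop :=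
  (forall i, P (b i)) /\
  forall x, P x -> exists! a : nat -> R,
    conv_in N (fun n => vsum n (fun i => vscal (a i) (b i))) x.

Definition CBspace (T : seqRVS -> Prop) (Nt : seqRVS -> R) : Prop :=
  BKspace T Nt /\ SchauderBasis T Nt e_can.

Definition CBFsequence (T : nat -> seqRVS -> Prop) (Nt : nat -> seqRVS -> R) : Prop :=
  (forall s, CBspace (T s) (Nt s)) /\ Fsequence T Nt.

Definition FFrame {V : RVS} (P : nat -> V -> Prop) (N : nat -> V -> R)
    (T : nat -> seqRVS -> Prop) (Nt : nat -> seqRVS -> R) (g : nat -> V -> R) : Prop :=
  (* each g_i restricted to X_F is in X_F^* (continuous linear on the Frechet space X_F) *)
  (forall i, (forall x y, inF P x -> inF P y -> g i (vadd x y) = g i x + g i y) /\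
             (forall a x, inF P x -> g i (vscal a x) = a * g i x) /\
             (exists s C, forall x, inF P x -> Rabs (g i x) <= C * N s x)) /\
  (forall f, inF P f -> inF T (fun i => g i f)) /\
  (forall s, exists A B, 0 < A /\ A <= B /\
     forall f, inF P f ->
       A * N s f <= Nt s (fun i => g i f) /\ Nt s (fun i => g i f) <= B * N s f) /\
  (exists Vop : seqRVS -> V,
     (forall c d, inF T c -> inF T d -> Vop (vadd c d) = vadd (Vop c) (Vop d)) /\
     (forall a c, inF T c -> Vop (vscal a c) = vscal a (Vop c)) /\
     (forall c, inF T c -> inF P (Vop c)) /\
     (forall f, inF P f -> Vop (fun i => g i f) = f) /\
     (forall s, exists K, forall c, inF T c -> N s (Vop c) <= K * Nt s c)).

(** {f_i} is a Theta^*-Bessel sequence for X^*, where Theta^* is identified with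
    {(g(e_i))_i : g in Theta^*} normed by the operator norm of g. *)
Definition ThetaDualBessel {V : RVS} (P : V -> Prop) (N : V -> R)
    (T : seqRVS -> Prop) (Nt : seqRVS -> R) (f : nat -> V) : Prop :=
  exists B, forall h : V -> R, ContLinFun P N h ->
    exists gt : seqRVS -> R, ContLinFun T Nt gt /\
      (forall i, gt (e_can i) = h (f i)) /\
      (forall M, 0 <= M -> opnorm_le P N h M -> opnorm_le T Nt gt (B * M)).

Definition DFBessel {V : RVS} (P : nat -> V -> Prop) (N : nat -> V -> R)
    (T : nat -> seqRVS -> Prop) (Nt : nat -> seqRVS -> R) (f : nat -> V) : Prop :=
  forall s, ThetaDualBessel (P s) (N s) (T s) (Nt s) f.

(* Main.v *)
Require Import Defs.
From Stdlib Require Import Reals Lra Lia ZArith Cantor Arith FunctionalExtensionality ClassicalEpsilon Classical.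
Open Scope R_scope.


Arguments vadd_assoc {_} _ _ _.
Arguments vadd_comm {_} _ _.
Arguments vadd_0r {_} _.
Arguments vadd_oppr {_} _.
Arguments vscal_assoc {_} _ _ _.
Arguments vscal_1 {_} _.
Arguments vscal_addv {_} _ _ _.
Arguments vscal_adds {_} _ _ _.

Section Alg.
Context {V : RVS}.
Implicit Types x y z u w : V.

Lemma vadd_0l x : vadd vzero x = x.
Proof. rewrite vadd_comm; apply vadd_0r. Qed.

Lemma vadd_oppl x : vadd (vopp x) x = vzero.
Proof. rewrite vadd_comm; apply vadd_oppr. Qed.

Lemma vadd_cancel x y z : vadd x y = vadd x z -> y = z.
Proof.
  intros H. rewrite <- (vadd_0l y), <- (vadd_0l z), <- (vadd_oppl x),
    <- !vadd_assoc, H. reflexivity.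
Qed.

Lemma vscal_0l x : vscal 0 x = vzero.
Proof.
  apply (vadd_cancel (vscal 0 x)). rewrite vadd_0r, <- vscal_adds.
  f_equal; ring.
Qed.

Lemma vscal_0r a : vscal a (@vzero V) = vzero.
Proof.
  apply (vadd_cancel (vscal a vzero)). rewrite vadd_0r, <- vscal_addv, vadd_0r.
  reflexivity.
Qed.

Lemma vopp_scal x : vopp x = vscal (-1) x.
Proof.
  apply (vadd_cancel x). rewrite vadd_oppr.
  rewrite <- (vscal_1 x) at 1. rewrite <- vscal_adds.
  replace (1 + -1) with 0 by ring. now rewrite vscal_0l.
Qed.

Lemma vsub_scal x y : vsub x y = vadd x (vscal (-1) y).
Proof. unfold vsub; now rewrite vopp_scal. Qed.

Lemma vadd_ACs x y z w : vadd (vadd x y) (vadd z w) = vadd (vadd x z) (vadd y w).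
Proof.
  rewrite <- !vadd_assoc. f_equal. rewrite !vadd_assoc. f_equal. apply vadd_comm.
Qed.

Lemma vsub_self x : vsub x x = vzero.
Proof. apply vadd_oppr. Qed.

Lemma vsub_0r x : vsub x vzero = x.
Proof. rewrite vsub_scal, vscal_0r; apply vadd_0r. Qed.

Lemma vsub_0l x : vsub vzero x = vscal (-1) x.
Proof. rewrite vsub_scal; apply vadd_0l. Qed.

Lemma vsub_add x y z w : vsub (vadd x y) (vadd z w) = vadd (vsub x z) (vsub y w).
Proof. rewrite !vsub_scal, vscal_addv. apply vadd_ACs. Qed.

Lemma vsub_scal2 a x y : vsub (vscal a x) (vscal a y) = vscal a (vsub x y).
Proof.
  rewrite !vsub_scal, vscal_addv, !vscal_assoc. f_equal. f_equal. ring.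
Qed.

Lemma vsub_chain x y z : vsub x z = vadd (vsub x y) (vsub y z).
Proof.
  unfold vsub. rewrite <- vadd_assoc, (vadd_assoc (vopp y)), vadd_oppl, vadd_0l.
  reflexivity.
Qed.

Lemma vsub_swap x y : vsub y x = vscal (-1) (vsub x y).
Proof.
  rewrite !vsub_scal, vscal_addv, vscal_assoc. replace (-1 * -1) with 1 by ring.
  rewrite vscal_1. apply vadd_comm.
Qed.

Lemma vsub_addK x y : vsub (vadd x y) x = y.
Proof.
  rewrite vsub_scal, (vadd_comm x y), <- vadd_assoc, <- (vscal_1 x) at 1.
  rewrite <- vscal_adds. replace (1 + -1) with 0 by ring. rewrite vscal_0l. apply vadd_0r.
Qed.

Lemma vsub_scals a b x : vsub (vscal a x) (vscal b x) = vscal (a - b) x.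
Proof.
  rewrite vsub_scal, vscal_assoc, <- vscal_adds. f_equal; ring.
Qed.

Lemma vsum_ext n (u v : nat -> V) : (forall i, (i < n)%nat -> u i = v i) -> vsum n u = vsum n v.
Proof.
  induction n; simpl; intros H; auto.
  rewrite IHn by (intros; apply H; lia). now rewrite H by lia.
Qed.

Lemma vsum_add n (u v : nat -> V) : vsum n (fun i => vadd (u i) (v i)) = vadd (vsum n u) (vsum n v).
Proof.
  induction n; simpl. now rewrite vadd_0r. rewrite IHn. apply vadd_ACs.
Qed.

Lemma vsum_scal n a (u : nat -> V) : vsum n (fun i => vscal a (u i)) = vscal a (vsum n u).
Proof.
  induction n; simpl. now rewrite vscal_0r. now rewrite IHn, vscal_addv.
Qed.

Lemma vsum_zero n : vsum n (fun _ => @vzero V) = vzero.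
Proof. induction n; simpl; auto. rewrite IHn; apply vadd_0r. Qed.

Lemma vsub_pm (x y : V) : vsub (vadd x y) (vsub x y) = vscal 2 y.
Proof.
  rewrite (vsub_scal x y). rewrite vsub_add, vsub_self, vadd_0l.
  rewrite vsub_scal, vscal_assoc. rewrite <- (vscal_1 y) at 1. rewrite <- vscal_adds. f_equal; ring.
Qed.

End Alg.


Fixpoint rsum (n : nat) (w : nat -> R) : R :=
  match n with O => 0 | S k => rsum k w + w k end.

Lemma rsum_ext n w1 w2 : (forall i, (i < n)%nat -> w1 i = w2 i) -> rsum n w1 = rsum n w2.
Proof.
  induction n; simpl; intros H; auto.
  rewrite IHn by (intros; apply H; lia). now rewrite H by lia.
Qed.

Lemma rsum_le n w1 w2 : (forall i, (i < n)%nat -> w1 i <= w2 i) -> rsum n w1 <= rsum n w2.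
Proof.
  induction n; simpl; intros H. lra.
  assert (rsum n w1 <= rsum n w2) by (apply IHn; intros; apply H; lia).
  assert (w1 n <= w2 n) by (apply H; lia). lra.
Qed.

Lemma rsum_nonneg n w : (forall i, 0 <= w i) -> 0 <= rsum n w.
Proof. induction n; simpl; intros H. lra. specialize (IHn H). specialize (H n). lra. Qed.

Lemma rsum_scal n a w : rsum n (fun i => a * w i) = a * rsum n w.
Proof. induction n; simpl. ring. rewrite IHn; ring. Qed.

Lemma Rabs_m1 : Rabs (-1) = 1.
Proof. unfold Rabs; destruct Rcase_abs; lra. Qed.

Section Norm.
Context {V : RVS} (P : V -> Prop) (N : V -> R) (HP : subspace P) (HN : is_norm_on P N).

Lemma P0 : P vzero. Proof. apply HP. Qed.
Lemma Padd x y : P x -> P y -> P (vadd x y). Proof. apply HP. Qed.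
Lemma Pscal a x : P x -> P (vscal a x). Proof. apply HP. Qed.
Lemma Psub x y : P x -> P y -> P (vsub x y).
Proof. intros; rewrite vsub_scal; apply Padd; auto; apply Pscal; auto. Qed.
Lemma Psum n u : (forall i, (i < n)%nat -> P (u i)) -> P (vsum n u).
Proof.
  induction n; simpl; intros H. apply P0. apply Padd. apply IHn; intros; apply H; lia. apply H; lia.
Qed.

Lemma Nnn x : P x -> 0 <= N x. Proof. apply HN. Qed.
Lemma Ndef x : P x -> N x = 0 -> x = vzero. Proof. apply HN. Qed.
Lemma Nscal a x : P x -> N (vscal a x) = Rabs a * N x. Proof. apply HN. Qed.
Lemma Ntri x y : P x -> P y -> N (vadd x y) <= N x + N y. Proof. apply HN. Qed.

Lemma Nzero : N vzero = 0.
Proof. rewrite <- (vscal_0l vzero), Nscal by apply P0. rewrite Rabs_R0; ring. Qed.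

Lemma Nsym x y : P x -> P y -> N (vsub x y) = N (vsub y x).
Proof.
  intros. rewrite (vsub_swap y x), Nscal by (apply Psub; auto).
  rewrite Rabs_m1; ring.
Qed.

Lemma Nchain x y z : P x -> P y -> P z -> N (vsub x z) <= N (vsub x y) + N (vsub y z).
Proof. intros. rewrite (vsub_chain x y z). apply Ntri; apply Psub; auto. Qed.

Lemma Nle_sub x y : P x -> P y -> N x <= N y + N (vsub x y).
Proof.
  intros. assert (N (vsub x vzero) <= N (vsub x y) + N (vsub y vzero)) by (apply Nchain; auto; apply P0).
  rewrite !vsub_0r in H1. lra.
Qed.

Lemma Nsub_le x y : P x -> P y -> N (vsub x y) <= N x + N y.
Proof.
  intros. rewrite vsub_scal. eapply Rle_trans. apply Ntri; auto. apply Pscal; auto.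
  rewrite Nscal by auto. rewrite Rabs_m1. lra.
Qed.

Lemma Nsum n u : (forall i, (i < n)%nat -> P (u i)) -> N (vsum n u) <= rsum n (fun i => N (u i)).
Proof.
  induction n; simpl; intros H. rewrite Nzero; lra.
  eapply Rle_trans. apply Ntri. apply Psum; intros; apply H; lia. apply H; lia.
  assert (N (vsum n u) <= rsum n (fun i => N (u i))) by (apply IHn; intros; apply H; lia). lra.
Qed.

Lemma conv_unique u x y : (forall n, P (u n)) -> P x -> P y -> conv_in N u x -> conv_in N u y -> x = y.
Proof.
  intros Hu Hx Hy Cx Cy. apply (vadd_cancel (vopp y)).
  rewrite vadd_oppl, vadd_comm. fold (vsub x y).
  apply Ndef. apply Psub; auto.
  assert (Hnn : 0 <= N (vsub x y)) by (apply Nnn, Psub; auto).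
  destruct (Rle_lt_or_eq_dec _ _ Hnn) as [Hlt|Heq]; [|auto].
  exfalso. set (e := N (vsub x y)) in *.
  destruct (Cx (e/2)) as [n1 H1]. lra. destruct (Cy (e/2)) as [n2 H2]. lra.
  specialize (H1 (max n1 n2) ltac:(lia)). specialize (H2 (max n1 n2) ltac:(lia)).
  assert (N (vsub x y) <= N (vsub x (u (max n1 n2))) + N (vsub (u (max n1 n2)) y)) by (apply Nchain; auto).
  rewrite (Nsym x (u _)) in H by auto. fold e in H. lra.
Qed.

Lemma conv_le u x z r n0 : (forall n, P (u n)) -> P x -> P z -> conv_in N u x ->
  (forall n, (n0 <= n)%nat -> N (vsub (u n) z) <= r) -> N (vsub x z) <= r.
Proof.
  intros Hu Hx Hz Cx H. apply Rnot_lt_le; intro Hlt.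
  destruct (Cx (N (vsub x z) - r)) as [n1 H1]. lra.
  specialize (H1 (max n0 n1) ltac:(lia)). specialize (H (max n0 n1) ltac:(lia)).
  assert (N (vsub x z) <= N (vsub x (u (max n0 n1))) + N (vsub (u (max n0 n1)) z)) by (apply Nchain; auto).
  rewrite (Nsym x (u _)) in H0 by auto. lra.
Qed.

Lemma conv_le0 u x r n0 : (forall n, P (u n)) -> P x -> conv_in N u x ->
  (forall n, (n0 <= n)%nat -> N (u n) <= r) -> N x <= r.
Proof.
  intros. rewrite <- (vsub_0r x). apply (conv_le u x vzero r n0); auto. apply P0.
  intros. rewrite vsub_0r; auto.
Qed.

Lemma conv_cauchy u x : (forall n, P (u n)) -> P x -> conv_in N u x -> cauchy_in N u.
Proof.
  intros Hu Hx C e He. destruct (C (e/2)) as [n0 H0]. lra. exists n0. intros n m Hn Hm.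
  assert (N (vsub (u n) (u m)) <= N (vsub (u n) x) + N (vsub x (u m))) by (apply Nchain; auto).
  rewrite (Nsym x (u m)) in H by auto. pose proof (H0 n Hn). pose proof (H0 m Hm). lra.
Qed.

Lemma conv_add u v x y : (forall n, P (u n)) -> (forall n, P (v n)) -> P x -> P y ->
  conv_in N u x -> conv_in N v y -> conv_in N (fun n => vadd (u n) (v n)) (vadd x y).
Proof.
  intros Hu Hv Hx Hy Cu Cv e He. destruct (Cu (e/2)) as [n1 H1]. lra.
  destruct (Cv (e/2)) as [n2 H2]. lra. exists (max n1 n2). intros n Hn.
  rewrite vsub_add. eapply Rle_lt_trans. apply Ntri; apply Psub; auto.
  specialize (H1 n ltac:(lia)). specialize (H2 n ltac:(lia)). lra.
Qed.

Lemma conv_scal a u x : (forall n, P (u n)) -> P x ->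
  conv_in N u x -> conv_in N (fun n => vscal a (u n)) (vscal a x).
Proof.
  intros Hu Hx Cu e He. destruct (Cu (e/(Rabs a + 1))) as [n1 H1].
  apply Rdiv_lt_0_compat; [lra| pose proof (Rabs_pos a); lra].
  exists n1. intros n Hn. rewrite vsub_scal2, Nscal by (apply Psub; auto).
  specialize (H1 n Hn). pose proof (Rabs_pos a).
  assert (Hnn : 0 <= N (vsub (u n) x)) by (apply Nnn, Psub; auto).
  apply (Rmult_lt_compat_l (Rabs a + 1)) in H1; [|lra].
  replace ((Rabs a + 1) * (e / (Rabs a + 1))) with e in H1 by (field; lra). nra.
Qed.

Lemma conv_const x : P x -> conv_in N (fun _ => x) x.
Proof. intros Hx e He; exists O; intros. rewrite vsub_self, Nzero; lra. Qed.

Lemma conv_eventually u v x : (exists n0, forall n, (n0 <= n)%nat -> u n = v n) ->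
  conv_in N u x -> conv_in N v x.
Proof.
  intros [n0 H0] C e He. destruct (C e He) as [n1 H1]. exists (max n0 n1).
  intros n Hn. rewrite <- H0 by lia. apply H1; lia.
Qed.

End Norm.

Lemma rsum_term n w i : (forall j, 0 <= w j) -> (i < n)%nat -> w i <= rsum n w.
Proof.
  induction n; simpl; intros H Hi. lia.
  pose proof (rsum_nonneg n w H). destruct (Nat.eq_dec i n) as [->|Hne]. lra.
  assert (w i <= rsum n w) by (apply IHn; auto; lia). specialize (H n). lra.
Qed.


Definition supn (u : nat -> R) : R :=
  match excluded_middle_informative (exists M, forall n, u n <= M) with
  | left H => proj1_sig (completeness (fun r => exists n, r = u n)
                 (let (M, HM) := H in ex_intro _ M (fun r (Hr : exists n, r = u n) =>
                    let (n, Hn) := Hr in eq_ind_r (fun r => r <= M) (HM n) Hn))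
                 (ex_intro _ (u O) (ex_intro _ O eq_refl)))
  | right _ => 0
  end.

Lemma supn_ub u n : (exists M, forall n, u n <= M) -> u n <= supn u.
Proof.
  intros H. unfold supn. destruct excluded_middle_informative as [H'|H']; [|contradiction].
  destruct completeness as [m [Hm1 Hm2]]. simpl. apply Hm1. now exists n.
Qed.

Lemma supn_le u M : (forall n, u n <= M) -> supn u <= M.
Proof.
  intros H. unfold supn. destruct excluded_middle_informative as [H'|H'].
  - destruct completeness as [m [Hm1 Hm2]]. simpl. apply Hm2. intros r [n ->]. auto.
  - exfalso. apply H'. eauto.
Qed.

Lemma supn_scal a u : 0 <= a -> (exists M, forall n, u n <= M) ->
  supn (fun n => a * u n) = a * supn u.
Proof.
  intros Ha Hb. apply Rle_antisym.
  - apply supn_le. intros n. apply Rmult_le_compat_l; auto. apply supn_ub; auto.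
  - assert (Hb' : exists M, forall n, a * u n <= M).
    { destruct Hb as [M HM]. exists (a * M). intros; apply Rmult_le_compat_l; auto. }
    destruct (Rle_lt_or_eq_dec _ _ Ha) as [Hp|<-].
    + assert (supn u <= / a * supn (fun n => a * u n)).
      { apply supn_le. intros n. pose proof (supn_ub (fun n => a * u n) n Hb').
        simpl in H. apply (Rmult_le_reg_l a); auto. rewrite <- Rmult_assoc, Rinv_r; lra. }
      apply (Rmult_le_compat_l a) in H; [|lra]. rewrite <- Rmult_assoc, Rinv_r in H; lra.
    + rewrite Rmult_0_l. pose proof (supn_ub (fun n => 0 * u n) O Hb'). simpl in H. lra.
Qed.


Definition rat_of (k : nat) : R :=
  let (u, w) := Cantor.of_nat k in let (p, q) := Cantor.of_nat w in (INR p - INR q) / (INR u + 1).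

Lemma int_as_nat (z : Z) : exists p q : nat, IZR z = INR p - INR q.
Proof.
  destruct (Z_le_gt_dec 0 z).
  - exists (Z.to_nat z), O. rewrite (INR_IZR_INZ (Z.to_nat z)), Z2Nat.id by auto. simpl. ring.
  - exists O, (Z.to_nat (- z)). rewrite (INR_IZR_INZ (Z.to_nat (- z))), Z2Nat.id by lia. simpl.
    rewrite opp_IZR. ring.
Qed.

Lemma rat_dense r e : 0 < e -> exists k, Rabs (rat_of k - r) < e.
Proof.
  intros He. destruct (INR_unbounded (/ e)) as [u Hu].
  pose proof (pos_INR u) as Hu0.
  set (z := up (r * (INR u + 1))). destruct (archimed (r * (INR u + 1))) as [H1 H2].
  destruct (int_as_nat z) as [p [q Hpq]].
  exists (Cantor.to_nat (u, Cantor.to_nat (p, q))). unfold rat_of.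
  rewrite !Cantor.cancel_of_to. rewrite <- Hpq. fold z in H1, H2.
  assert (Hl : / (INR u + 1) < e).
  { apply Rlt_le_trans with (/ (/ e)). apply Rinv_lt_contravar. apply Rmult_lt_0_compat.
    apply Rinv_0_lt_compat; auto. lra. lra. rewrite Rinv_inv. lra. }
  replace (IZR z / (INR u + 1) - r) with ((IZR z - r * (INR u + 1)) / (INR u + 1)) by (field; lra).
  rewrite Rabs_right. unfold Rdiv. apply Rle_lt_trans with (1 * / (INR u + 1)).
  apply Rmult_le_compat_r. left; apply Rinv_0_lt_compat; lra. lra. lra.
  apply Rle_ge. unfold Rdiv. apply Rmult_le_pos. lra. left; apply Rinv_0_lt_compat; lra.
Qed.

Fixpoint decf (K m : nat) : nat -> nat :=
  match K with
  | O => fun _ => O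
  | S K' => let (a, b) := Cantor.of_nat m in fun i => if Nat.eqb i K' then a else decf K' b i
  end.

Lemma decf_surj K (h : nat -> nat) : exists m, forall i, (i < K)%nat -> decf K m i = h i.
Proof.
  induction K. exists O; intros; lia.
  destruct IHK as [m Hm]. exists (Cantor.to_nat (h K, m)). intros i Hi. cbn [decf].
  rewrite Cantor.cancel_of_to. destruct (Nat.eqb_spec i K). now subst. apply Hm; lia.
Qed.

Definition dseq (n : nat) : nat -> R :=
  let (K, m) := Cantor.of_nat n in fun i => if Nat.ltb i K then rat_of (decf K m i) else 0.

Lemma rsum_const K a : rsum K (fun _ => a) = INR K * a.
Proof. induction K. simpl; ring. cbn [rsum]. rewrite IHK, S_INR. ring. Qed.

Lemma rsum_support n K g : (forall i, 0 <= g i) -> (forall i, (K <= i)%nat -> g i = 0) -> rsum n g <= rsum K g.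
Proof.
  intros Hg HK. destruct (le_lt_dec n K).
  - clear HK. induction l. lra. simpl. specialize (Hg m). lra.
  - induction l. simpl. rewrite HK by lia. lra. simpl. rewrite HK by lia. lra.
Qed.


Definition Ps {V : RVS} (f : nat -> V) (c : seqRVS) (n : nat) : V :=
  vsum n (fun i => vscal (c i) (f i)).
Definition Theta {V : RVS} (P : nat -> V -> Prop) (N : nat -> V -> R) (f : nat -> V) (s : nat) (c : seqRVS) : Prop :=
  exists x, P s x /\ conv_in (N s) (Ps f c) x.
Definition Nt {V : RVS} (N : nat -> V -> R) (f : nat -> V) (s : nat) (c : seqRVS) : R :=
  supn (fun n => N s (Ps f c n)).
Definition trunc (K : nat) (c : seqRVS) : seqRVS := fun i => if Nat.ltb i K then c i else 0.

Lemma frac_le1 x : 0 <= x -> x / (x + 1) <= 1.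
Proof.
  intros Hx. apply (Rmult_le_reg_r (x + 1)). lra.
  replace (x / (x + 1) * (x + 1)) with x by (field; lra). lra.
Qed.

Section Main.
Context {V : RVS} (P : nat -> V -> Prop) (N : nat -> V -> R) (f : nat -> V).
Hypothesis HF : Fsequence P N.
Hypothesis Hf : forall i, f i <> vzero /\ inF P (f i).

Lemma HPs s : subspace (P s). Proof. apply HF. Qed.
Lemma HNs s : is_norm_on (P s) (N s). Proof. apply HF. Qed.
Lemma Hcomp s : complete_in (P s) (N s). Proof. apply HF. Qed.
Hint Resolve HPs HNs : core.

Definition sP0 s := P0 (P s) (HPs s).
Definition sPadd s := Padd (P s) (HPs s).
Definition sPscal s := Pscal (P s) (HPs s).
Definition sPsub s := Psub (P s) (HPs s).
Definition sPsum s := Psum (P s) (HPs s).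
Definition sNnn s := Nnn (P s) (N s) (HNs s).
Definition sNdef s := Ndef (P s) (N s) (HNs s).
Definition sNscal s := Nscal (P s) (N s) (HNs s).
Definition sNtri s := Ntri (P s) (N s) (HNs s).
Definition sN0 s := Nzero (P s) (N s) (HPs s) (HNs s).
Definition sNsym s := Nsym (P s) (N s) (HPs s) (HNs s).
Definition sNchain s := Nchain (P s) (N s) (HPs s) (HNs s).
Definition sNle_sub s := Nle_sub (P s) (N s) (HPs s) (HNs s).
Definition sNsub_le s := Nsub_le (P s) (N s) (HPs s) (HNs s).
Definition sNsum s := Nsum (P s) (N s) (HPs s) (HNs s).
Definition sconv_unique s := conv_unique (P s) (N s) (HPs s) (HNs s).
Definition sconv_le s := conv_le (P s) (N s) (HPs s) (HNs s).
Definition sconv_le0 s := conv_le0 (P s) (N s) (HPs s) (HNs s).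
Definition sconv_cauchy s := conv_cauchy (P s) (N s) (HPs s) (HNs s).
Definition sconv_add s := conv_add (P s) (N s) (HPs s) (HNs s).
Definition sconv_scal s := conv_scal (P s) (N s) (HPs s) (HNs s).
Definition sconv_const s := conv_const (P s) (N s) (HPs s) (HNs s).
Hint Resolve sP0 sPadd sPscal sPsub : core.

Lemma Pmono s t x : (s <= t)%nat -> P t x -> P s x.
Proof.
  intros H. induction H; auto. intros Hx. apply IHle. apply HF; auto.
Qed.

Lemma Nmono s t x : (s <= t)%nat -> P t x -> N s x <= N t x.
Proof.
  intros H. induction H; intros Hx. lra.
  eapply Rle_trans. apply IHle. apply HF; auto. apply HF; auto.
Qed.

Lemma conv_mono s t u x : (s <= t)%nat -> (forall n, P t (u n)) -> P t x ->
  conv_in (N t) u x -> conv_in (N s) u x.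
Proof.
  intros Hst Hu Hx C e He. destruct (C e He) as [n0 H0]. exists n0. intros n Hn.
  eapply Rle_lt_trans. apply (Nmono s t _ Hst). apply sPsub; auto. apply H0; auto.
Qed.

Lemma fP s i : P s (f i). Proof. apply Hf. Qed.
Lemma fpos s i : 0 < N s (f i).
Proof.
  destruct (Rle_lt_or_eq_dec _ _ (sNnn s _ (fP s i))) as [H|H]; auto.
  exfalso. apply (proj1 (Hf i)). apply (sNdef s); auto. apply fP.
Qed.
Hint Resolve fP : core.

Lemma PsP s c n : P s (Ps f c n).
Proof. unfold Ps. apply sPsum; auto. Qed.
Hint Resolve PsP : core.

Lemma Ps_add c d n : Ps f (vadd c d) n = vadd (Ps f c n) (Ps f d n).
Proof.
  unfold Ps. rewrite <- vsum_add. apply vsum_ext. intros. simpl. apply vscal_adds.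
Qed.

Lemma Ps_scal a c n : Ps f (vscal a c) n = vscal a (Ps f c n).
Proof.
  unfold Ps. rewrite <- vsum_scal. apply vsum_ext. intros. simpl. now rewrite vscal_assoc.
Qed.

Lemma Ps_sub c d n : Ps f (vsub c d) n = vsub (Ps f c n) (Ps f d n).
Proof.
  rewrite !vsub_scal. rewrite <- Ps_scal, <- Ps_add. unfold Ps. apply vsum_ext. intros.
  simpl. f_equal.
Qed.

Lemma Ps_zero n : Ps f (@vzero seqRVS) n = vzero.
Proof.
  unfold Ps. rewrite <- (@vsum_zero V n). apply vsum_ext; intros. simpl. apply vscal_0l.
Qed.

Lemma Ps_step c i : vscal (c i) (f i) = vsub (Ps f c (S i)) (Ps f c i).
Proof. unfold Ps; simpl. now rewrite vsub_addK. Qed.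

Lemma Ps_ext c d n : (forall i, (i < n)%nat -> c i = d i) -> Ps f c n = Ps f d n.
Proof. intros. unfold Ps. apply vsum_ext. intros. now rewrite H. Qed.

Lemma Theta_bounded s c : Theta P N f s c -> exists M, forall n, N s (Ps f c n) <= M.
Proof.
  intros [x [Hx C]]. destruct (C 1) as [n0 H0]. lra.
  exists (N s x + 1 + rsum n0 (fun i => N s (Ps f c i))). intros n.
  assert (Hnn : forall j, 0 <= N s (Ps f c j)) by (intros; apply sNnn; auto).
  pose proof (rsum_nonneg n0 _ Hnn).
  assert (0 <= N s x) by (apply sNnn; auto).
  destruct (le_lt_dec n0 n) as [Hn|Hn].
  - specialize (H0 n Hn). pose proof (sNle_sub s (Ps f c n) x (PsP _ _ _) Hx). lra.
  - pose proof (rsum_term n0 _ n Hnn Hn). lra.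
Qed.

Lemma Nt_ub s c n : Theta P N f s c -> N s (Ps f c n) <= Nt N f s c.
Proof. intros H. unfold Nt. apply (supn_ub (fun n => N s (Ps f c n))). now apply Theta_bounded. Qed.

Lemma Nt_le s c M : (forall n, N s (Ps f c n) <= M) -> Nt N f s c <= M.
Proof. intros H. unfold Nt. now apply (supn_le (fun n => N s (Ps f c n))). Qed.

Lemma Nt_nn s c : Theta P N f s c -> 0 <= Nt N f s c.
Proof.
  intros H. pose proof (Nt_ub s c O H). unfold Ps in H0; simpl in H0.
  rewrite sN0 in H0; auto.
Qed.

Lemma lim_le s c x : Theta P N f s c -> P s x -> conv_in (N s) (Ps f c) x -> N s x <= Nt N f s c.
Proof.
  intros HT Hx C. apply (sconv_le0 s (Ps f c) x _ O); auto.
  intros; now apply Nt_ub.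
Qed.

Lemma coord s c i : Theta P N f s c -> Rabs (c i) * N s (f i) <= 2 * Nt N f s c.
Proof.
  intros H. rewrite <- sNscal; auto. rewrite Ps_step.
  eapply Rle_trans. apply sNsub_le; auto.
  pose proof (Nt_ub s c (S i) H). pose proof (Nt_ub s c i H). lra.
Qed.

Lemma coord' s c i : Theta P N f s c -> Rabs (c i) <= (2 / N s (f i)) * Nt N f s c.
Proof.
  intros H. pose proof (coord s c i H). pose proof (fpos s i).
  apply (Rmult_le_reg_r (N s (f i))); auto.
  replace (2 / N s (f i) * Nt N f s c * N s (f i)) with (2 * Nt N f s c) by (field; lra). auto.
Qed.

Lemma finite_Ps c K : (forall i, (K <= i)%nat -> c i = 0) -> forall n, (K <= n)%nat -> Ps f c n = Ps f c K.
Proof.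
  intros Hc n Hn. induction Hn; auto. unfold Ps in *; simpl. rewrite IHHn, Hc by lia.
  now rewrite vscal_0l, vadd_0r.
Qed.

Lemma finite_Theta c K : (forall i, (K <= i)%nat -> c i = 0) -> forall t, Theta P N f t c.
Proof.
  intros Hc t. exists (Ps f c K). split; auto.
  apply (conv_eventually (N t) (fun _ => Ps f c K)).
  exists K. intros n Hn. symmetry. now apply finite_Ps.
  apply sconv_const; auto.
Qed.

Lemma trunc_finite K c : forall i, (K <= i)%nat -> trunc K c i = 0.
Proof. intros i Hi. unfold trunc. destruct (Nat.ltb_spec i K); auto; lia. Qed.

Lemma trunc_Theta K c t : Theta P N f t (trunc K c).
Proof. apply finite_Theta with K. apply trunc_finite. Qed.

Lemma Ps_trunc K c n : Ps f (trunc K c) n = Ps f c (Nat.min n K).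
Proof.
  destruct (le_lt_dec n K).
  - rewrite Nat.min_l by auto. apply Ps_ext. intros. unfold trunc. destruct (Nat.ltb_spec i K); auto; lia.
  - rewrite Nat.min_r by lia. rewrite (finite_Ps _ K) by (auto using trunc_finite; lia).
    apply Ps_ext. intros. unfold trunc. destruct (Nat.ltb_spec i K); auto; lia.
Qed.

Lemma tail s c : Theta P N f s c -> forall e, 0 < e -> exists K0, forall K, (K0 <= K)%nat ->
  Nt N f s (vsub (trunc K c) c) <= e.
Proof.
  intros [x [Hx C]] e He. destruct (sconv_cauchy s _ x (PsP s c) Hx C e He) as [K0 HK].
  exists K0. intros K HK0. apply Nt_le. intros n. rewrite Ps_sub, Ps_trunc.
  destruct (le_lt_dec n K).
  - rewrite Nat.min_l by auto. rewrite vsub_self, sN0; lra.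
  - rewrite Nat.min_r by lia. left. apply HK; lia.
Qed.

Lemma Theta_sub s : subspace (Theta P N f s).
Proof.
  split; [|split].
  - exists vzero. split. apply sP0.
    apply conv_eventually with (N := N s) (v := Ps f vzero) (u := fun _ => vzero).
    exists O. intros; now rewrite Ps_zero. apply sconv_const; auto.
  - intros c d [x [Hx Cx]] [y [Hy Cy]]. exists (vadd x y). split. apply sPadd; auto.
    apply conv_eventually with (N := N s) (u := fun n => vadd (Ps f c n) (Ps f d n)).
    exists O; intros; now rewrite Ps_add. apply sconv_add; auto.
  - intros a c [x [Hx Cx]]. exists (vscal a x). split. apply sPscal; auto.
    apply conv_eventually with (N := N s) (u := fun n => vscal a (Ps f c n)).
    exists O; intros; now rewrite Ps_scal. apply sconv_scal; auto.
Qed.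

Lemma Theta_norm s : is_norm_on (Theta P N f s) (Nt N f s).
Proof.
  split; [|split; [|split]].
  - apply Nt_nn.
  - intros c Hc H0. apply functional_extensionality. intros i. simpl.
    pose proof (coord s c i Hc). rewrite H0 in H. pose proof (fpos s i).
    pose proof (Rabs_pos (c i)).
    assert (Rabs (c i) = 0) by nra. destruct (Req_dec (c i) 0); auto. exfalso. pose proof (Rabs_pos_lt (c i) H4). lra.
  - intros a c Hc. unfold Nt. rewrite <- supn_scal; [| apply Rabs_pos | now apply Theta_bounded].
    f_equal. apply functional_extensionality. intros n. rewrite Ps_scal, sNscal; auto.
  - intros c d Hc Hd. apply Nt_le. intros n. rewrite Ps_add.
    eapply Rle_trans. apply sNtri; auto.
    pose proof (Nt_ub s c n Hc). pose proof (Nt_ub s d n Hd). lra.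
Qed.

Lemma Theta_vsub s c d : Theta P N f s c -> Theta P N f s d -> Theta P N f s (vsub c d).
Proof.
  intros. rewrite vsub_scal. apply (Theta_sub s); auto. apply (Theta_sub s); auto.
Qed.

Lemma Ps_conv_coef s (u : nat -> seqRVS) c n :
  (forall i, Un_cv (fun k => u k i) (c i)) -> conv_in (N s) (fun k => Ps f (u k) n) (Ps f c n).
Proof.
  intros Hcv. induction n.
  - unfold Ps; simpl. apply sconv_const; auto.
  - unfold Ps; simpl. fold (Ps f c n). apply sconv_add; auto.
    intros; apply PsP. intros e He. pose proof (fpos s n) as Hfp.
    destruct (Hcv n (e / N s (f n))) as [k0 Hk0]. apply Rdiv_lt_0_compat; auto.
    exists k0. intros k Hk. rewrite vsub_scals, sNscal; auto. specialize (Hk0 k Hk).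
    unfold R_dist in Hk0. apply (Rmult_lt_compat_r (N s (f n))) in Hk0; auto.
    replace (e / N s (f n) * N s (f n)) with e in Hk0 by (field; lra). lra.
Qed.

Lemma Theta_complete s : complete_in (Theta P N f s) (Nt N f s).
Proof.
  intros u Hu Hc.
  assert (Hci : forall i, Cauchy_crit (fun k => u k i)).
  { intros i e He. pose proof (fpos s i) as Hfp.
    destruct (Hc (e * N s (f i) / 2)) as [k0 Hk0]. apply Rdiv_lt_0_compat; [nra|lra].
    exists k0. intros n m Hn Hm. unfold R_dist.
    pose proof (coord' s (vsub (u n) (u m)) i (Theta_vsub s _ _ (Hu n) (Hu m))) as Hco.
    change (vsub (u n) (u m) i) with (u n i + - u m i) in Hco. specialize (Hk0 n m Hn Hm).
    assert (2 / N s (f i) * Nt N f s (vsub (u n) (u m)) < 2 / N s (f i) * (e * N s (f i) / 2)).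
    { apply Rmult_lt_compat_l; auto. apply Rdiv_lt_0_compat; lra. }
    replace (2 / N s (f i) * (e * N s (f i) / 2)) with e in H by (field; lra).
    replace (u n i - u m i) with (u n i + - u m i) by ring. lra. }
  set (c := fun i => proj1_sig (R_complete _ (Hci i))).
  assert (Hcv : forall i, Un_cv (fun k => u k i) (c i)).
  { intros i. unfold c. destruct (R_complete _ (Hci i)); simpl; auto. }
  assert (H2 : forall e, 0 < e -> exists k0, forall k, (k0 <= k)%nat -> forall n,
            N s (vsub (Ps f (u k) n) (Ps f c n)) <= e).
  { intros e He. destruct (Hc e He) as [k0 Hk0]. exists k0. intros k Hk n.
    rewrite sNsym by auto.
    apply (sconv_le s (fun m => Ps f (u m) n) (Ps f c n) (Ps f (u k) n) e k0); auto.
    apply Ps_conv_coef; auto.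
    intros m Hm. rewrite <- Ps_sub. left. eapply Rle_lt_trans. apply Nt_ub.
    apply Theta_vsub; auto. apply Hk0; auto. }
  assert (Hcc : cauchy_in (N s) (Ps f c)).
  { intros e He. destruct (H2 (e/3)) as [k0 Hk0]. lra.
    destruct (Hu k0) as [y [Hy Cy]].
    destruct (sconv_cauchy s _ y (PsP s _) Hy Cy (e/3)) as [n1 Hn1]. lra.
    exists n1. intros n m Hn Hm.
    pose proof (sNchain s (Ps f c n) (Ps f (u k0) n) (Ps f c m) (PsP _ _ _) (PsP _ _ _) (PsP _ _ _)).
    pose proof (sNchain s (Ps f (u k0) n) (Ps f (u k0) m) (Ps f c m) (PsP _ _ _) (PsP _ _ _) (PsP _ _ _)).
    pose proof (Hk0 k0 (le_n _) n). pose proof (Hk0 k0 (le_n _) m).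
    rewrite sNsym in H1 by auto. specialize (Hn1 n m Hn Hm). lra. }
  destruct (Hcomp s _ (PsP s c) Hcc) as [x [Hx Cx]].
  exists c. split. exists x; auto.
  intros e He. destruct (H2 (e/2)) as [k0 Hk0]. lra. exists k0. intros k Hk.
  apply Rle_lt_trans with (e/2); [|lra]. apply Nt_le. intros n. rewrite Ps_sub. apply Hk0; auto.
Qed.

Lemma vsum_ecan (a : seqRVS) n : @vsum seqRVS n (fun i => vscal (a i) (e_can i)) = trunc n a.
Proof.
  apply functional_extensionality. intros j. induction n.
  - simpl. unfold trunc. destruct (Nat.ltb_spec j 0); [lia|auto].
  - transitivity (@vsum seqRVS n (fun i => vscal (a i) (e_can i)) j + a n * e_can n j). reflexivity.
    rewrite IHn. unfold trunc, e_can.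
    destruct (Nat.eqb_spec n j); destruct (Nat.ltb_spec j n); destruct (Nat.ltb_spec j (S n)); try lia; try lra.
    subst; lra.
Qed.

Lemma Theta_Banach s : Banach (Theta P N f s) (Nt N f s).
Proof. split; [apply Theta_sub|split; [apply Theta_norm|apply Theta_complete]]. Qed.

Lemma ecan_finite i : forall j, (S i <= j)%nat -> e_can i j = 0.
Proof. intros j Hj. unfold e_can. destruct (Nat.eqb_spec i j); auto; lia. Qed.

Lemma Theta_schauder s : SchauderBasis (Theta P N f s) (Nt N f s) e_can.
Proof.
  split. intros i. apply finite_Theta with (S i). apply ecan_finite.
  intros c Hc. exists c. split.
  - intros e He. destruct (tail s c Hc (e/2)) as [K0 HK]. lra. exists K0. intros n Hn.
    rewrite vsum_ecan. specialize (HK n Hn). lra.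
  - intros a' Ha'. apply functional_extensionality. intros i.
    destruct (Req_dec (c i) (a' i)) as [|Hne]; auto. exfalso.
    set (e := Rabs (a' i - c i)).
    assert (He : 0 < e) by (apply Rabs_pos_lt; lra).
    pose proof (fpos s i) as Hfp.
    destruct (Ha' (e * N s (f i) / 2)) as [n0 Hn0]. apply Rdiv_lt_0_compat; [nra|lra].
    specialize (Hn0 (max n0 (S i)) ltac:(lia)). rewrite vsum_ecan in Hn0.
    pose proof (coord' s (vsub (trunc (max n0 (S i)) a') c) i
       (Theta_vsub s _ _ (trunc_Theta _ _ _) Hc)) as Hco.
    change (vsub (trunc (max n0 (S i)) a') c i) with (trunc (max n0 (S i)) a' i + - c i) in Hco.
    assert (Htr : trunc (max n0 (S i)) a' i = a' i).
    { unfold trunc. destruct (Nat.ltb_spec i (max n0 (S i))); [auto|lia]. }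
    rewrite Htr in Hco.
    assert (2 / N s (f i) * Nt N f s (vsub (trunc (Init.Nat.max n0 (S i)) a') c) < 2 / N s (f i) * (e * N s (f i) / 2)).
    { apply Rmult_lt_compat_l; auto. apply Rdiv_lt_0_compat; lra. }
    replace (2 / N s (f i) * (e * N s (f i) / 2)) with e in H by (field; lra).
    unfold e in *. replace (a' i + - c i) with (a' i - c i) in Hco by ring. lra.
Qed.

Lemma Theta_BK s : BKspace (Theta P N f s) (Nt N f s).
Proof.
  split. apply Theta_Banach. intros i. exists (2 / N s (f i)). intros c Hc. now apply coord'.
Qed.

Lemma Nt_tri s c d : Theta P N f s c -> Theta P N f s d -> Nt N f s (vadd c d) <= Nt N f s c + Nt N f s d.
Proof. apply (Theta_norm s). Qed.

Lemma Nt_coef_bound s (w : seqRVS) K b : (forall i, (K <= i)%nat -> w i = 0) ->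
  (forall i, (i < K)%nat -> Rabs (w i) * N s (f i) <= b) -> Nt N f s w <= INR K * b.
Proof.
  intros HK Hb. apply Nt_le. intros n. unfold Ps.
  eapply Rle_trans. apply sNsum. intros; apply sPscal; auto.
  assert (Hg : forall i, 0 <= N s (vscal (w i) (f i))) by (intros; apply sNnn; auto).
  eapply Rle_trans. apply (rsum_support n K); auto.
  intros i Hi. rewrite HK by auto. rewrite vscal_0l, sN0; auto.
  rewrite <- rsum_const. apply rsum_le. intros i Hi. rewrite sNscal; auto.
Qed.

Lemma Theta_sep s : separable_in (Theta P N f s) (Nt N f s).
Proof.
  exists dseq. split.
  { intros n. apply finite_Theta with (fst (Cantor.of_nat n)). intros i Hi. unfold dseq.
    destruct (Cantor.of_nat n) as [K m]. simpl in Hi. destruct (Nat.ltb_spec i K); auto; lia. }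
  intros c Hc e He.
  destruct (tail s c Hc (e/2)) as [K HK]. lra. specialize (HK K (le_n _)).
  set (dl i := e / (4 * (INR K + 1) * (N s (f i) + 1))).
  assert (Hdl : forall i, 0 < dl i).
  { intros i. unfold dl. pose proof (fpos s i). pose proof (pos_INR K).
    apply Rdiv_lt_0_compat; auto. apply Rmult_lt_0_compat; lra. }
  assert (Hh : forall i, {k | Rabs (rat_of k - c i) < dl i}).
  { intros i. apply constructive_indefinite_description. apply rat_dense; auto. }
  set (h i := proj1_sig (Hh i)).
  destruct (decf_surj K h) as [m Hm].
  exists (Cantor.to_nat (K, m)).
  set (dn := (dseq (Cantor.to_nat (K, m)) : seqRVS)).
  assert (Hdn : forall i, dn i = if Nat.ltb i K then rat_of (h i) else 0).
  { intros i. unfold dn, dseq. rewrite Cantor.cancel_of_to.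
    destruct (Nat.ltb_spec i K); auto; try now rewrite Hm. }
  assert (HdT : Theta P N f s dn).
  { apply finite_Theta with K. intros i Hi. rewrite Hdn. destruct (Nat.ltb_spec i K); auto; lia. }
  rewrite (vsub_chain dn (trunc K c) c).
  eapply Rle_lt_trans. apply Nt_tri; apply Theta_vsub; auto using trunc_Theta.
  assert (Nt N f s (vsub dn (trunc K c)) <= INR K * (e / (4 * (INR K + 1)))).
  { apply Nt_coef_bound.
    - intros i Hi. change (vsub dn (trunc K c) i) with (dn i + - trunc K c i).
      rewrite Hdn, trunc_finite by auto. destruct (Nat.ltb_spec i K); [lia|ring].
    - intros i Hi. change (vsub dn (trunc K c) i) with (dn i + - trunc K c i).
      rewrite Hdn. unfold trunc. destruct (Nat.ltb_spec i K); [|lia].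
      pose proof (proj2_sig (Hh i)) as Hi'. fold (h i) in Hi'.
      pose proof (fpos s i). pose proof (pos_INR K).
      replace (rat_of (h i) + - c i) with (rat_of (h i) - c i) by ring.
      apply Rle_trans with (dl i * N s (f i)). apply Rmult_le_compat_r; lra.
      unfold dl. replace (e / (4 * (INR K + 1) * (N s (f i) + 1)) * N s (f i))
        with (e / (4 * (INR K + 1)) * (N s (f i) / (N s (f i) + 1))) by (field; lra).
      rewrite <- (Rmult_1_r (e / (4 * (INR K + 1)))) at 2.
      apply Rmult_le_compat_l. apply Rlt_le, Rdiv_lt_0_compat; lra. apply frac_le1; lra. }
  pose proof (pos_INR K).
  assert (INR K * (e / (4 * (INR K + 1))) <= e / 4).
  { replace (INR K * (e / (4 * (INR K + 1)))) with (e / 4 * (INR K / (INR K + 1))) by (field; lra).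
    rewrite <- (Rmult_1_r (e/4)) at 2. apply Rmult_le_compat_l. lra. apply frac_le1; lra. }
  lra.
Qed.

Context (g : nat -> V -> R).
Hypothesis Hg : forall i, ContLinFun (P 0%nat) (N 0%nat) (g i).
Hypothesis Hexp : forall s x, P s x -> conv_in (N s) (fun n => vsum n (fun i => vscal (g i x) (f i))) x.

Definition gx (x : V) : seqRVS := fun i => g i x.

Lemma g_add s i x y : P s x -> P s y -> g i (vadd x y) = g i x + g i y.
Proof. intros. apply (Hg i); apply (Pmono 0 s); auto; lia. Qed.
Lemma g_scal s i a x : P s x -> g i (vscal a x) = a * g i x.
Proof. intros. apply (Hg i); apply (Pmono 0 s); auto; lia. Qed.
Lemma g_bound s i : exists C, 0 <= C /\ forall x, P s x -> Rabs (g i x) <= C * N s x.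
Proof.
  destruct (Hg i) as [_ [_ [C HC]]]. exists (Rabs C). split. apply Rabs_pos.
  intros x Hx. assert (P 0 x) by (apply (Pmono 0 s); auto; lia).
  eapply Rle_trans. apply HC; auto. pose proof (Nmono 0 s x ltac:(lia) Hx).
  pose proof (sNnn 0 x H). pose proof (Rle_abs C). pose proof (Rabs_pos C). nra.
Qed.

Lemma gx_Theta s x : P s x -> Theta P N f s (gx x).
Proof. intros. exists x. split; auto. apply Hexp; auto. Qed.

Lemma gx_add s x y : P s x -> P s y -> gx (vadd x y) = vadd (gx x) (gx y).
Proof. intros. apply functional_extensionality. intros i. simpl. unfold gx. now apply (g_add s). Qed.
Lemma gx_scal s a x : P s x -> gx (vscal a x) = vscal a (gx x).
Proof. intros. apply functional_extensionality. intros i. simpl. unfold gx. now apply (g_scal s). Qed.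
Lemma gx_sub s x y : P s x -> P s y -> gx (vsub x y) = vsub (gx x) (gx y).
Proof. intros. rewrite !vsub_scal. rewrite (gx_add s), (gx_scal s); auto. Qed.
Lemma gx_zero : gx vzero = vzero.
Proof.
  apply functional_extensionality. intros i. simpl. unfold gx.
  rewrite <- (vscal_0l vzero). rewrite (g_scal 0). ring. apply sP0.
Qed.

Section BSs.
Variable s : nat.

Definition Sop n x := Ps f (gx x) n.

Lemma Sop_sub n x y : P s x -> P s y -> Sop n (vsub x y) = vsub (Sop n x) (Sop n y).
Proof. intros. unfold Sop. now rewrite (gx_sub s), Ps_sub. Qed.
Lemma Sop_scal n a x : P s x -> Sop n (vscal a x) = vscal a (Sop n x).
Proof. intros. unfold Sop. now rewrite (gx_scal s), Ps_scal. Qed.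
Lemma Sop_add n x y : P s x -> P s y -> Sop n (vadd x y) = vadd (Sop n x) (Sop n y).
Proof. intros. unfold Sop. now rewrite (gx_add s), Ps_add. Qed.
Lemma SopP n x : P s (Sop n x). Proof. apply PsP. Qed.

Lemma Sop_bounded n : exists L, 0 <= L /\ forall x, P s x -> N s (Sop n x) <= L * N s x.
Proof.
  induction n.
  - exists 0. split. lra. intros x Hx. unfold Sop, Ps; simpl. rewrite sN0. pose proof (sNnn s x Hx). lra.
  - destruct IHn as [L [HL0 HL]]. destruct (g_bound s n) as [C [HC0 HC]].
    exists (L + C * N s (f n)). split. pose proof (sNnn s _ (fP s n)). nra.
    intros x Hx. unfold Sop, Ps; simpl. fold (Ps f (gx x) n). fold (Sop n x).
    eapply Rle_trans. apply sNtri. apply SopP. apply sPscal; auto.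
    rewrite sNscal; auto. specialize (HL x Hx). specialize (HC x Hx). unfold gx.
    pose proof (sNnn s _ (fP s n)). nra.
Qed.

Definition Eset n := fun r => exists x, P s x /\ N s x <= 1 /\ r = N s (Sop n x).

Lemma Eset_bound n : bound (Eset n).
Proof.
  destruct (Sop_bounded n) as [L [HL0 HL]]. exists L. intros r [x [Hx [H1 ->]]].
  specialize (HL x Hx). nra.
Qed.

Lemma Eset_ne n : exists r, Eset n r.
Proof. exists (N s (Sop n vzero)). exists vzero. split. apply sP0. rewrite sN0. split; [lra|auto]. Qed.

Definition opn n := proj1_sig (completeness (Eset n) (Eset_bound n) (Eset_ne n)).

Lemma opn_lub n : is_lub (Eset n) (opn n).
Proof. unfold opn. destruct completeness; simpl; auto. Qed.

Lemma Sop_zero n : Sop n vzero = vzero.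
Proof. unfold Sop. rewrite gx_zero. apply Ps_zero. Qed.

Lemma opn_nn n : 0 <= opn n.
Proof.
  destruct (opn_lub n) as [H1 _]. apply H1. exists vzero. split. apply sP0. rewrite sN0, Sop_zero, sN0. split; lra.
Qed.

Lemma opn_bound n x : P s x -> N s (Sop n x) <= opn n * N s x.
Proof.
  intros Hx. pose proof (sNnn s x Hx) as Hn.
  destruct (Rle_lt_or_eq_dec _ _ Hn) as [Hp|He].
  - destruct (opn_lub n) as [H1 _].
    assert (N s (Sop n (vscal (/ N s x) x)) <= opn n).
    { apply H1. exists (vscal (/ N s x) x). split. apply sPscal; auto. split; auto.
      rewrite sNscal by auto. rewrite Rabs_right. rewrite Rinv_l; lra.
      left; apply Rinv_0_lt_compat; auto. }
    rewrite Sop_scal, sNscal in H by (auto using SopP). rewrite Rabs_right in H.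
    2: left; apply Rinv_0_lt_compat; auto.
    apply (Rmult_le_compat_l (N s x)) in H; [|lra]. rewrite <- Rmult_assoc, Rinv_r in H; lra.
  - symmetry in He. apply sNdef in He; auto. subst. rewrite Sop_zero, sN0. lra.
Qed.

Lemma opn_approx n : 0 < opn n -> exists x, P s x /\ N s x <= 1 /\ 2/3 * opn n < N s (Sop n x).
Proof.
  intros Hp. apply NNPP. intros Hn. destruct (opn_lub n) as [_ H2].
  assert (opn n <= 2/3 * opn n).
  { apply H2. intros r [x [Hx [H1 ->]]]. apply Rnot_lt_le. intros Hlt. apply Hn. exists x; auto. }
  lra.
Qed.

Lemma BS : exists B, 1 <= B /\ forall x, P s x -> forall n, N s (Sop n x) <= B * N s x.
Proof.
  destruct (classic (exists M, forall n, opn n <= M)) as [[M HM]|HnM].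
  - exists (Rmax M 0 + 1). split. pose proof (Rmax_r M 0). lra.
    intros x Hx n. eapply Rle_trans. apply opn_bound; auto.
    apply Rmult_le_compat_r. apply sNnn; auto. pose proof (Rmax_l M 0). specialize (HM n). lra.
  - exfalso.
    set (q := fun k : nat => (/3) ^ k).
    assert (Hq : forall k, 0 < q k) by (intros; apply pow_lt; lra).
    assert (Hqs : forall k, q (S k) = /3 * q k) by (intros; reflexivity).
    assert (Hnk : forall k : nat, {n | 6 * (INR k + 1) < opn n * q k}).
    { intros k. apply constructive_indefinite_description. apply NNPP. intros Hne. apply HnM.
      exists (6 * (INR k + 1) / q k). intros n. apply Rnot_lt_le. intros Hlt. apply Hne. exists n.
      apply (Rmult_lt_compat_r (q k)) in Hlt; auto.
      replace (6 * (INR k + 1) / q k * q k) with (6 * (INR k + 1)) in Hlt by (field; specialize (Hq k); lra). auto. }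
    set (nk := fun k => proj1_sig (Hnk k)).
    assert (Hnk1 : forall k, 6 * (INR k + 1) < opn (nk k) * q k) by (intros; apply (proj2_sig (Hnk k))).
    assert (Hopp : forall k, 0 < opn (nk k)).
    { intros k. specialize (Hnk1 k). pose proof (pos_INR k). specialize (Hq k).
      pose proof (opn_nn (nk k)). destruct (Rle_lt_or_eq_dec _ _ H0); auto. rewrite <- e in Hnk1. lra. }
    assert (Hzk : forall k, {z | P s z /\ N s z <= 1 /\ 2/3 * opn (nk k) < N s (Sop (nk k) z)}).
    { intros k. apply constructive_indefinite_description. apply opn_approx; auto. }
    set (y := fun k => vscal (q k) (proj1_sig (Hzk k))).
    assert (HyP : forall k, P s (y k)) by (intros; apply sPscal; apply (proj2_sig (Hzk k))).
    assert (Hy1 : forall k, N s (y k) <= q k).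
    { intros k. unfold y. destruct (Hzk k) as [z [Hz [Hz1 Hz2]]]; simpl.
      rewrite sNscal, Rabs_right by (auto; specialize (Hq k); lra). specialize (Hq k). nra. }
    assert (Hy2 : forall k, 2/3 * opn (nk k) * q k < N s (Sop (nk k) (y k))).
    { intros k. unfold y. destruct (Hzk k) as [z [Hz [Hz1 Hz2]]]; simpl.
      rewrite Sop_scal, sNscal, Rabs_right by (auto using SopP; specialize (Hq k); lra). specialize (Hq k). nra. }
    set (step := fun k xk => if Rle_dec (N s (Sop (nk k) (vsub xk (y k)))) (N s (Sop (nk k) (vadd xk (y k))))
                             then vadd xk (y k) else vsub xk (y k)).
    set (xs := fix xs k := match k with O => vzero | S k' => step k' (xs k') end).
    assert (HxsS : forall k, xs (S k) = step k (xs k)) by reflexivity.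
    assert (HxP : forall k, P s (xs k)).
    { induction k. apply sP0. rewrite HxsS. unfold step. destruct Rle_dec; auto. }
    assert (Hinc : forall k, N s (vsub (xs (S k)) (xs k)) <= q k).
    { intros k. rewrite HxsS. unfold step. destruct Rle_dec.
      - rewrite vsub_addK. auto.
      - rewrite (vsub_scal (xs k) (y k)), vsub_addK, sNscal, Rabs_m1 by auto. rewrite Rmult_1_l. auto. }
    assert (Hbig : forall k, N s (Sop (nk k) (y k)) <= N s (Sop (nk k) (xs (S k)))).
    { intros k. rewrite HxsS. unfold step.
      set (a := Sop (nk k) (vadd (xs k) (y k))). set (b := Sop (nk k) (vsub (xs k) (y k))).
      assert (Hab : vsub a b = vscal 2 (Sop (nk k) (y k))).
      { unfold a, b. rewrite <- Sop_sub, <- Sop_scal by auto. f_equal.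
        apply vsub_pm. }
      assert (2 * N s (Sop (nk k) (y k)) <= N s a + N s b).
      { replace (2 * N s (Sop (nk k) (y k))) with (N s (vsub a b)).
        apply sNsub_le; apply SopP. rewrite Hab, sNscal by apply SopP. rewrite Rabs_right; lra. }
      destruct Rle_dec as [Hle|Hle]; [change (Sop (nk k) (vadd (xs k) (y k))) with a | change (Sop (nk k) (vsub (xs k) (y k))) with b]; lra. }
    assert (Htail : forall k p, N s (vsub (xs (p + k)%nat) (xs k)) <= 3/2 * q k * (1 - q p)).
    { intros k p. induction p.
      - simpl. rewrite vsub_self, sN0. unfold q; simpl. lra.
      - simpl plus. eapply Rle_trans. apply (sNchain s _ (xs (p + k)%nat)); auto.
        pose proof (Hinc (p + k)%nat). replace (q (p + k)%nat) with (q p * q k) in H by (unfold q; now rewrite pow_add).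
        rewrite Hqs. lra. }
    assert (Htail' : forall k m, (k <= m)%nat -> N s (vsub (xs m) (xs k)) <= 3/2 * q k).
    { intros k m Hkm. replace m with ((m - k) + k)%nat by lia. eapply Rle_trans. apply Htail.
      pose proof (Hq k). pose proof (Hq (m - k)%nat). nra. }
    assert (Hcau : cauchy_in (N s) xs).
    { intros e He. destruct (pow_lt_1_zero (/3) ltac:(rewrite Rabs_right; lra) (e / 3) ltac:(lra)) as [k0 Hk0].
      exists k0. intros n m Hn Hm. eapply Rle_lt_trans. apply (sNchain s _ (xs k0)); auto.
      rewrite (sNsym s (xs k0)) by auto. pose proof (Htail' k0 n Hn). pose proof (Htail' k0 m Hm).
      specialize (Hk0 k0 (le_n _)). rewrite Rabs_right in Hk0 by (left; apply (Hq k0)). fold (q k0) in Hk0. lra. }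
    destruct (Hcomp s xs HxP Hcau) as [X [HX CX]].
    assert (HXk : forall k, N s (vsub X (xs (S k))) <= 1/2 * q k).
    { intros k. apply (sconv_le s xs X (xs (S k)) _ (S k)); auto. intros m Hm.
      eapply Rle_trans. apply Htail'; auto. rewrite Hqs. lra. }
    destruct (Theta_bounded s (gx X) (gx_Theta s X HX)) as [M HM].
    destruct (INR_unbounded M) as [k Hk].
    specialize (HM (nk k)). fold (Sop (nk k) X) in HM.
    pose proof (sNle_sub s (Sop (nk k) (xs (S k))) (Sop (nk k) X) (SopP _ _) (SopP _ _)).
    rewrite sNsym in H by apply SopP. rewrite <- Sop_sub in H by auto.
    pose proof (opn_bound (nk k) (vsub X (xs (S k))) (sPsub _ _ _ HX (HxP _))).
    pose proof (HXk k). pose proof (Hbig k). pose proof (Hy2 k). pose proof (Hnk1 k). pose proof (Hopp k).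
    pose proof (Hq k).
    assert (opn (nk k) * N s (vsub X (xs (S k))) <= opn (nk k) * (1/2 * q k)) by (apply Rmult_le_compat_l; lra).
    lra.
Qed.

End BSs.

Definition Vop (c : seqRVS) : V :=
  match excluded_middle_informative (exists x, P 0 x /\ conv_in (N 0) (Ps f c) x) with
  | left H => proj1_sig (constructive_indefinite_description _ H)
  | right _ => vzero
  end.

Lemma Vop_spec s c x : P s x -> conv_in (N s) (Ps f c) x -> Vop c = x.
Proof.
  intros Hx C. assert (Hx0 : P 0 x) by (apply (Pmono 0 s); auto; lia).
  assert (C0 : conv_in (N 0) (Ps f c) x) by (apply (conv_mono 0 s); auto; lia).
  unfold Vop. destruct excluded_middle_informative as [H|H].
  - destruct constructive_indefinite_description as [y [Hy Cy]]. simpl.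
    apply (sconv_unique 0 (Ps f c)); auto.
  - exfalso. apply H. eauto.
Qed.

Lemma Vop_Theta s c : Theta P N f s c -> P s (Vop c) /\ conv_in (N s) (Ps f c) (Vop c).
Proof. intros [x [Hx C]]. rewrite (Vop_spec s c x); auto. Qed.

Lemma Vop_add s c d : Theta P N f s c -> Theta P N f s d -> Vop (vadd c d) = vadd (Vop c) (Vop d).
Proof.
  intros Hc Hd. destruct (Vop_Theta s c Hc) as [H1 C1]. destruct (Vop_Theta s d Hd) as [H2 C2].
  apply (Vop_spec s). apply sPadd; auto.
  apply conv_eventually with (N := N s) (u := fun n => vadd (Ps f c n) (Ps f d n)).
  exists O; intros; now rewrite Ps_add. apply sconv_add; auto.
Qed.

Lemma Vop_scal s a c : Theta P N f s c -> Vop (vscal a c) = vscal a (Vop c).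
Proof.
  intros Hc. destruct (Vop_Theta s c Hc) as [H1 C1].
  apply (Vop_spec s). apply sPscal; auto.
  apply conv_eventually with (N := N s) (u := fun n => vscal a (Ps f c n)).
  exists O; intros; now rewrite Ps_scal. apply sconv_scal; auto.
Qed.

Lemma Vop_bound s c : Theta P N f s c -> N s (Vop c) <= Nt N f s c.
Proof. intros Hc. destruct (Vop_Theta s c Hc) as [H1 C1]. now apply lim_le. Qed.

Lemma Vop_ecan i : Vop (e_can i) = f i.
Proof.
  apply (Vop_spec 0). auto.
  apply conv_eventually with (N := N 0) (u := fun _ => f i).
  exists (S i). intros n Hn. rewrite (finite_Ps _ (S i)); auto using ecan_finite.
  unfold Ps; simpl. fold (Ps f (e_can i) i).
  rewrite (Ps_ext (e_can i) (@vzero seqRVS)). rewrite Ps_zero, vadd_0l.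
  unfold e_can. rewrite Nat.eqb_refl. now rewrite vscal_1.
  intros j Hj. unfold e_can. simpl. destruct (Nat.eqb_spec i j); auto; lia.
  apply sconv_const; auto.
Qed.

Lemma Vop_gx s x : P s x -> Vop (gx x) = x.
Proof. intros Hx. apply (Vop_spec s); auto. exact (Hexp s x Hx). Qed.

Lemma main_FFrame : FFrame P N (Theta P N f) (Nt N f) g.
Proof.
  assert (HF0 : forall x, inF P x -> P 0 x) by (intros x H; apply H).
  split; [|split; [|split]].
  - intros i. destruct (Hg i) as [Ha [Hs [C HC]]]. split; [|split].
    + intros; apply Ha; auto.
    + intros; apply Hs; auto.
    + exists 0%nat, C. intros; apply HC; auto.
  - intros x Hx s. apply gx_Theta. apply Hx.
  - intros s. destruct (BS s) as [B [HB1 HB]]. exists 1, B. split; [lra|split; [lra|]].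
    intros x Hx. split.
    + rewrite Rmult_1_l. apply lim_le. apply gx_Theta, Hx. apply Hx. exact (Hexp s x (Hx s)).
    + apply Nt_le. intros n. apply (HB x (Hx s) n).
  - exists Vop. split; [|split; [|split; [|split]]].
    + intros c d Hc Hd. apply (Vop_add 0); auto.
    + intros a c Hc. apply (Vop_scal 0); auto.
    + intros c Hc s. apply (Vop_Theta s c (Hc s)).
    + intros x Hx. apply (Vop_gx 0 x (Hx 0%nat)).
    + intros s. exists 1. intros c Hc. rewrite Rmult_1_l. apply Vop_bound, Hc.
Qed.

Lemma main_DF : DFBessel P N (Theta P N f) (Nt N f) f.
Proof.
  intros s. exists 1. intros h [Ha [Hs [C HC]]]. exists (fun c => h (Vop c)). split; [|split].
  - split; [|split].
    + intros c d Hc Hd. rewrite (Vop_add s) by auto. apply Ha; apply (Vop_Theta s); auto.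
    + intros a c Hc. rewrite (Vop_scal s) by auto. apply Hs; apply (Vop_Theta s); auto.
    + exists (Rabs C). intros c Hc. destruct (Vop_Theta s c Hc) as [H1 _].
      eapply Rle_trans. apply HC; auto. pose proof (Vop_bound s c Hc).
      pose proof (sNnn s _ H1). pose proof (Rle_abs C). pose proof (Rabs_pos C). nra.
  - intros i. now rewrite Vop_ecan.
  - intros M HM Hop c Hc. destruct (Vop_Theta s c Hc) as [H1 _].
    eapply Rle_trans. apply Hop; auto. pose proof (Vop_bound s c Hc). nra.
Qed.

End Main.

Section CB.
Context {V : RVS} (P : nat -> V -> Prop) (N : nat -> V -> R) (f : nat -> V).
Hypothesis HF : Fsequence P N.
Hypothesis Hf : forall i, f i <> vzero /\ inF P (f i).

Lemma main_CB : CBFsequence (Theta P N f) (Nt N f).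
Proof.
  split.
  - intros s. split. apply (Theta_BK P N f HF Hf). apply (Theta_schauder P N f HF Hf).
  - split; [|split; [|split; [|split]]].
    + intros s. split. apply (Theta_Banach P N f HF Hf). apply (Theta_sep P N f HF Hf).
    + intros s c [x [Hx C]]. exists x. split. apply HF; auto.
      apply (conv_mono P N HF s (S s)); auto. intros; apply (PsP P N f HF Hf).
    + exists (e_can 0). split.
      * intros H. assert (e_can 0 0%nat = (@vzero seqRVS) 0%nat) by now rewrite H.
        unfold e_can in H0. simpl in H0. lra.
      * intros t. apply (finite_Theta P N f HF Hf) with 1%nat. apply ecan_finite.
    + intros s c Hc. apply Nt_le. intros n. eapply Rle_trans. apply HF. apply (PsP P N f HF Hf).
      apply (Nt_ub P N f HF Hf); auto.
    + intros s c Hc e He. destruct (tail P N f HF Hf s c Hc (e/2)) as [K HK]. lra.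
      exists (trunc K c). split. intros t; apply (trunc_Theta P N f HF Hf).
      specialize (HK K (le_n _)). lra.
Qed.
End CB.

Theorem proposition4p1 (V : RVS) (P : nat -> V -> Prop) (N : nat -> V -> R)
  (g : nat -> V -> R) (f : nat -> V) :
  Fsequence P N ->
  (forall i, ContLinFun (P 0%nat) (N 0%nat) (g i)) ->
  (forall i, f i <> vzero /\ inF P (f i)) ->
  (forall s x, P s x -> conv_in (N s) (fun n => vsum n (fun i => vscal (g i x) (f i))) x) ->
  exists (T : nat -> seqRVS -> Prop) (Nt : nat -> seqRVS -> R),
    CBFsequence T Nt /\ FFrame P N T Nt g /\ DFBessel P N T Nt f.
Proof.
  intros HF Hg Hf Hexp. exists (Theta P N f), (Nt N f). split; [|split].
  - apply (main_CB P N f HF Hf).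
  - apply (main_FFrame P N f HF Hf g); auto.
  - apply (main_DF P N f HF Hf).
Qed.
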